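(* Let $R$ be a commutative ring with nonzero identity, $M$ an $R$-module, $\delta$ an expansion of ideals of $R$, $I$ a proper ideal of $R$ and $N$ a submodule of $M$ with $IM\subseteq N$. Define $\delta_{(+)}$ on ideals of the idealization $R(+)M$ by $\delta_{(+)}(J(+)L)=\delta(J)(+)M$. Then $I$ is a $\delta$-$n$-ideal of $R$ if and only if $I(+)N$ is a $\delta_{(+)}$-$n$-ideal of $R(+)M$.
   Context: An expansion of ideals of a ring $R$ is a map $\delta$ from the set of ideals of $R$ to itself such that $I\subseteq\delta(I)$ for every ideal $I$, and $\delta(I)\subseteq\delta(J)$ whenever $I\subseteq J$. $\sqrt{0}$ denotes the nilradical of the ring in question. Given an expansion $\delta$ of ideals of a ring $R$, a proper ideal $I$ of $R$ is a $\delta$-$n$-ideal if whenever $a,b\in R$ with $ab\in I$ and $a\notin\sqrt{0}$, then $b\in\delta(I)$. The idealization $R(+)M=R\times M$ has componentwise addition and multiplication $(r_1,m_1)(r_2,m_2)=(r_1r_2,r_1m_2+r_2m_1)$; for an ideal $J$ of $R$ and submodule $L$ of $M$, $J(+)L=J\times L$ is an ideal of $R(+)M$ iff $JM\subseteq L$, and $\sqrt{0_{R(+)M}}=\sqrt{0_R}(+)M$. *)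

(* Defs.v *)
From HB Require Import structures.
From mathcomp Require Import all_boot all_order all_algebra.
Set Implicit Arguments. Unset Strict Implicit. Unset Printing Implicit Defensive.
Import Order.TTheory GRing.Theory Num.Theory.
Local Open Scope ring_scope.

Section RingNotions.
Variable T : comNzRingType.

Definition is_ideal (I : T -> Prop) : Prop :=
  [/\ I 0, (forall x y, I x -> I y -> I (x + y)) & (forall r x, I x -> I (r * x))].

Definition is_proper_ideal (I : T -> Prop) : Prop := is_ideal I /\ ~ I 1.

Definition nilradical (x : T) : Prop := exists n : nat, x ^+ n = 0.

Definition expansion (delta : (T -> Prop) -> (T -> Prop)) : Prop :=
  [/\ (forall I, is_ideal I -> is_ideal (delta I)),
      (forall I, is_ideal I -> forall x, I x -> delta I x) &
      (forall I J, is_ideal I -> is_ideal J ->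
         (forall x, I x -> J x) -> forall x, delta I x -> delta J x)].

Definition delta_n_ideal (delta : (T -> Prop) -> (T -> Prop)) (I : T -> Prop) : Prop :=
  is_proper_ideal I /\
  forall a b : T, I (a * b) -> ~ nilradical a -> delta I b.

End RingNotions.

Section Modules.
Variables (R : comNzRingType) (M : lmodType R).

Definition is_submodule (N : M -> Prop) : Prop :=
  [/\ N 0, (forall x y, N x -> N y -> N (x + y)) & (forall r x, N x -> N (r *: x))].

(** I M ⊆ N : every element r *: m with r ∈ I lies in N (hence also all sums). *)
Definition ideal_times_module_sub (I : R -> Prop) (N : M -> Prop) : Prop :=
  forall r m, I r -> N (r *: m).

End Modules.

Definition idealization (R : comNzRingType) (M : lmodType R) : Type := (R * M)%type.

Section Idealization.
Variables (R : comNzRingType) (M : lmodType R).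

HB.instance Definition _ := GRing.Zmodule.on (idealization M).

Definition idz_one : idealization M := (1, 0).
Definition idz_mul (x y : idealization M) : idealization M :=
  (x.1 * y.1, x.1 *: y.2 + y.1 *: x.2).

Lemma idz_mulA : associative idz_mul.
Proof.
move=> [a u] [b v] [c w]; rewrite /idz_mul /=; congr pair; first by rewrite mulrA.
by rewrite !scalerDr !scalerA addrA (mulrC c a) (mulrC c b) addrAC.
Qed.

Lemma idz_mulC : commutative idz_mul.
Proof. by move=> [a u] [b v]; rewrite /idz_mul /= mulrC addrC. Qed.

Lemma idz_mul1 : left_id idz_one idz_mul.
Proof. by move=> [a u]; rewrite /idz_mul /= mul1r scale1r scaler0 addr0. Qed.

Lemma idz_mulDl : left_distributive idz_mul +%R.
Proof.
move=> [a u] [b v] [c w]; rewrite /idz_mul /=; congr pair; first by rewrite mulrDl.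
by rewrite scalerDl scalerDr addrACA.
Qed.

Lemma idz_one_neq0 : idz_one != 0.
Proof. by apply/negP => /eqP [] /eqP; rewrite oner_eq0. Qed.

HB.instance Definition _ := GRing.Zmodule_isComNzRing.Build (idealization M)
  idz_mulA idz_mulC idz_mul1 idz_mulDl idz_one_neq0.

Lemma idz_mulE (x y : idealization M) :
  x * y = (x.1 * y.1, x.1 *: y.2 + y.1 *: x.2) :> idealization M.
Proof. by []. Qed.

Definition idz_set (J : R -> Prop) (L : M -> Prop) : idealization M -> Prop :=
  fun x => J x.1 /\ L x.2.

(** delta_(+)(J(+)L) = delta(J)(+)M.  Extended to arbitrary subsets K of R(+)M
    by using the projection of K onto R in place of J (for K = J(+)L with L
    nonempty, this projection is exactly J). *)
Definition delta_plus (delta : (R -> Prop) -> (R -> Prop))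
  (K : idealization M -> Prop) : idealization M -> Prop :=
  idz_set (delta (fun r => exists m, K (r, m))) (fun _ => True).

End Idealization.

(* Main.v *)
Require Import Defs.
From HB Require Import structures.
From mathcomp Require Import all_boot all_order all_algebra.
Import GRing.Theory.
Local Open Scope ring_scope.

Lemma idz_exp1 (R : comNzRingType) (M : lmodType R) (x : idealization M) n :
  (x ^+ n).1 = x.1 ^+ n.
Proof.
elim: n => [|n IH]; first by rewrite !expr0.
by rewrite !exprS idz_mulE /= IH.
Qed.

Lemma idz_nil (R : comNzRingType) (M : lmodType R) (x : idealization M) :
  nilradical x <-> nilradical x.1.
Proof.
split=> [[n Hn]|[n Hn]].
  by exists n; rewrite -idz_exp1 Hn.
exists (n * 2)%N; rewrite exprM.
have H1 : (x ^+ n).1 = 0 by rewrite idz_exp1.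
move: H1; case: (x ^+ n) => a v /= ->.
by rewrite expr2 idz_mulE /= mul0r !scale0r addr0.
Qed.

Theorem proposition2p26 (R : comNzRingType) (M : lmodType R)
  (delta : (R -> Prop) -> (R -> Prop)) (I : R -> Prop) (N : M -> Prop) :
  expansion delta -> is_proper_ideal I -> is_submodule N ->
  ideal_times_module_sub I N ->
  (delta_n_ideal delta I <->
   @delta_n_ideal (idealization M) (@delta_plus R M delta) (@idz_set R M I N)).
Proof.
move=> [Hd1 Hd2 Hd3] [[I0 ID IM] I1] [N0 ND NM] HIN.
set P := (fun r => exists m, @idz_set R M I N (r, m)).
have IP : is_ideal I by [].
have PI : forall r, P r <-> I r.
  move=> r; split; first by case=> m [].
  by move=> Ir; exists 0; split.
have PP : is_ideal P.
  split; first by apply/PI.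
    by move=> x y /PI Hx /PI Hy; apply/PI; apply: ID.
  by move=> r x /PI Hx; apply/PI; apply: IM.
have DP : forall x, delta P x <-> delta I x.
  move=> x; split; apply: Hd3 => // y; by move/PI.
split.
- move=> [_ H]; split.
    split; first split.
    + by split.
    + by move=> [a u] [b v] [/= Ia Nu] [/= Ib Nv]; split; [apply: ID | apply: ND].
    + move=> [r w] [a u] [/= Ia Nu]; rewrite idz_mulE /=; split; first by apply: IM.
      by apply: ND; [apply: NM | apply: HIN].
    + by move=> [/= H1 _]; apply: I1.
  move=> [a u] [b v]; rewrite /idz_set idz_mulE /= => [[Iab _]] Hn.
  rewrite /delta_plus /idz_set /=; split=> //.
  apply/DP; apply: (H a b Iab) => Hna; apply: Hn; exact/idz_nil.
- move=> [_ H]; split; first by split.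
  move=> a b Iab Hna.
  have := H (a, 0) (b, 0).
  rewrite /delta_plus /idz_set idz_mulE /= !scaler0 addr0.
  case; first by split.
    by move/idz_nil.
  by move=> /DP.
Qed.
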